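(* Assume $\sigma:=\sup_{g\in\mathcal G}S(g)<\infty$. For any probability measure $Q$ on $\mathcal G$, any finite Borel partition $\mathcal A$ of $\mathcal M$, and any $g,g'\in\mathcal G$, $$\bigl|\hat S_{Q,\mathcal A}(g)-\hat S_{Q,\mathcal A}(g')\bigr|\le\sigma\bigl(g(\mathcal M)+g'(\mathcal M)\bigr).$$
   Context: $\mathcal M$ is a complete separable metric space; $\mathcal G$ the finite integer-valued Borel measures on $\mathcal M$; $S:\mathcal G\to\mathbb R_+$ Borel; $n$ a positive integer. $g_A(B):=g(B\cap A)$; $X$ is the canonical random element of $\mathcal G$ and $Q[\cdot\mid X_A=g_A]$ a regular conditional distribution. $\hat S_{Q,\mathcal A}(g):=-n\sum_{A\in\mathcal A}\bigl(\log Q[e^{-S(X)/n}\mid X_A=g_A]-\log Q[e^{-S(X)/n}]\bigr)$. *)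

(* Defs.v *)
From HB Require Import structures.
From mathcomp Require Import all_boot all_order all_algebra.
From mathcomp Require Import all_classical all_reals all_analysis measurable_realfun.
Set Implicit Arguments. Unset Strict Implicit. Unset Printing Implicit Defensive.
Import Order.TTheory GRing.Theory Num.Theory.
Local Open Scope classical_set_scope.
Local Open Scope ring_scope.

Definition borelType (R : realType) (M : completePseudoMetricType R) :=
  g_sigma_algebraType (@open M).

Definition separable_space (T : topologicalType) :=
  exists D : set T, countable D /\ dense D.

Record gmeas d (Mb : measurableType d) (R : realType) := GMeas {
  gm :> {measure set Mb -> \bar R} ;
  gm_int : forall B, measurable B -> exists m : nat, gm B = (m%:R)%:E }.

Definition gzero d (Mb : measurableType d) (R : realType) : gmeas Mb R.
Proof.
refine (@GMeas _ _ _ (@mzero _ Mb R) _).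
by move=> B _; exists 0%N.
Defined.

HB.instance Definition _ d (Mb : measurableType d) (R : realType) :=
  gen_eqMixin (gmeas Mb R).
HB.instance Definition _ d (Mb : measurableType d) (R : realType) :=
  gen_choiceMixin (gmeas Mb R).
HB.instance Definition _ d (Mb : measurableType d) (R : realType) :=
  isPointed.Build (gmeas Mb R) (gzero Mb R).

Definition gmeas_gen d (Mb : measurableType d) (R : realType)
  : set (set (gmeas Mb R)) :=
  [set (fun g : gmeas Mb R => g B) @^-1` U |
     B in (@measurable _ Mb) & U in (@measurable _ (\bar R))].

Definition G d (Mb : measurableType d) (R : realType) :=
  g_sigma_algebraType (@gmeas_gen d Mb R).

(* Restriction g_A(B) := g(B \cap A) (A Borel; the zero measure otherwise,
   a case which never occurs below). *)
Definition restr d (Mb : measurableType d) (R : realType) (A : set Mb)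
  (g : gmeas Mb R) : gmeas Mb R.
Proof.
case: (pselect (measurable A)) => [mA|_]; last exact: gzero Mb R.
refine (@GMeas _ _ _ (mrestr g mA) _).
move=> B mB; rewrite /mrestr; apply: gm_int; exact: measurableI.
Defined.

(* Regular conditional distribution of X given X_A (X the identity on G):
   a probability kernel kappa (y |-> kappa y) on G such that
   Q[X \in B, X_A \in C] = \int_{X_A \in C} kappa (X_A g) B dQ(g). *)
Definition is_rcd d (Mb : measurableType d) (R : realType)
  (Q : probability (G Mb R) R) (A : set Mb)
  (kappa : G Mb R -> probability (G Mb R) R) :=
  (forall B : set (G Mb R), measurable B ->
     measurable_fun setT (fun y : G Mb R => kappa y B)) /\
  (forall B C : set (G Mb R), measurable B -> measurable C ->
     Q (B `&` (@restr d Mb R A) @^-1` C) =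
     (\int[Q]_(g in (@restr d Mb R A) @^-1` C) kappa (restr A g) B)%E).

Definition Eexp d (Mb : measurableType d) (R : realType)
  (P : probability (G Mb R) R) (S : G Mb R -> R) (n : nat) : R :=
  fine (\int[P]_g (expR (- (S g / n%:R)))%:E)%E.

Definition Shat d (Mb : measurableType d) (R : realType)
  (S : G Mb R -> R) (n : nat) (Q : probability (G Mb R) R)
  (k : nat) (As : 'I_k -> set Mb)
  (kappa : 'I_k -> G Mb R -> probability (G Mb R) R) (g : G Mb R) : R :=
  - n%:R * \sum_(i < k)
      (ln (Eexp (kappa i (restr (As i) g)) S n) - ln (Eexp Q S n)).

(* Main.v *)
Require Import Defs.
From HB Require Import structures.
From mathcomp Require Import all_boot all_order all_algebra.
From mathcomp Require Import all_classical all_reals all_analysis measurable_realfun.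
From mathcomp Require Import lra.
Import Order.TTheory GRing.Theory Num.Theory.
Local Open Scope classical_set_scope.
Local Open Scope ring_scope.

Lemma G_insep d (Mb : measurableType d) (R : realType) (y y' : G Mb R) :
  (forall B, measurable B -> y B = y' B) ->
  forall E : set (G Mb R), measurable E -> (E y <-> E y').
Proof.
move=> hyy E mE.
have : (smallest (sigma_algebra setT) (@gmeas_gen d Mb R)) E by exact: mE.
apply: (@smallest_sub _ _ _ [set E | E y <-> E y']).
- split => //=.
  + move=> A /= [h1 h2]; split=> -[_ nA]; split=> //; by [move/h2 | move/h1].
  + move=> A hA; split=> -[i /= Ai]; exists i => //; by apply/(hA i).
- move=> _ [B mB [U mU <-]] /=; by rewrite hyy.
Qed.

Lemma kappa_insep d (Mb : measurableType d) (R : realType)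
  (kappa : G Mb R -> probability (G Mb R) R)
  (hk : forall B : set (G Mb R), measurable B ->
     measurable_fun setT (fun y : G Mb R => kappa y B))
  (y y' : G Mb R) :
  (forall B, measurable B -> y B = y' B) ->
  forall B, measurable B -> kappa y B = kappa y' B.
Proof.
move=> hyy B mB.
have := hk B mB measurableT [set kappa y B] (emeasurable_set1 _).
rewrite setTI => mE.
have /(@G_insep _ _ _ _ _ hyy _ mE) := erefl (kappa y B).
by move=> ->.
Qed.

Lemma part_sum d (Mb : measurableType d) (R : realType) (g : gmeas Mb R)
  k (As : 'I_k -> set Mb) :
  (forall i, measurable (As i)) ->
  (forall i j, i != j -> As i `&` As j = set0) ->
  \bigcup_i As i = setT ->
  fine (g setT) = \sum_(i < k) fine (g (As i)).
Proof.
move=> mA dA cA.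
have -> : [set: Mb] = \big[setU/set0]_(i < k) As i.
  apply/seteqP; split=> x; last by [].
  move=> _; have : (\bigcup_i As i) x by rewrite cA.
  by case=> i _ Ai; rewrite (bigD1 i) //=; left.
rewrite measure_semi_additive_ord //.
- rewrite -sum_fine // => i _.
  have [m hm] := gm_int g (mA i).
  have hf : (g (As i) \is a fin_num)%E by rewrite hm.
  exact: hf.
- by apply/trivIsetP => i j _ _; exact: dA.
- exact: bigsetU_measurable.
Qed.

Lemma restr_eq d (Mb : measurableType d) (R : realType) (A : set Mb)
  (g g' : gmeas Mb R) : measurable A -> g A = 0%E -> g' A = 0%E ->
  forall B, measurable B -> restr A g B = restr A g' B.
Proof.
move=> mA g0 g'0 B mB; rewrite /restr; case: pselect => // mA' /=.
rewrite /mrestr.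
have h (h : gmeas Mb R) : h A = 0%E -> h (B `&` A) = 0%E.
  move=> h0; apply/eqP; rewrite eq_le measure_ge0 andbT -h0.
  apply: le_measure => //; rewrite inE //; exact: measurableI.
by rewrite h // h.
Qed.

Lemma int_bounds d (T : measurableType d) (R : realType) (P : probability T R)
  (f : T -> R) (a : R) :
  measurable_fun setT f -> (forall x, a <= f x <= 1) -> 0 <= a ->
  a <= fine (\int[P]_x (f x)%:E)%E <= 1.
Proof.
move=> mf hf a0.
have P1 : (P [set: T] = 1)%E by exact: probability_setT.
have mf' : measurable_fun setT (fun x => (f x)%:E) by exact/measurable_EFinP.
have lo : (a%:E <= \int[P]_x (f x)%:E)%E.
  have -> : a%:E = (\int[P]_x (cst a%:E) x)%E.
    rewrite integral_cst // -[LHS]mule1; congr (_ * _)%E; symmetry; exact: P1.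
  apply: ge0_le_integral => //.
  by move=> x _; rewrite lee_fin; case/andP: (hf x).
have hi : (\int[P]_x (f x)%:E <= 1%E)%E.
  have -> : (1%E : \bar R) = (\int[P]_x (cst 1%E) x)%E.
    rewrite integral_cst // -[LHS]mule1; congr (_ * _)%E; symmetry; exact: P1.
  apply: ge0_le_integral => //.
  - by move=> x _; rewrite lee_fin; case/andP: (hf x) => h _; apply: le_trans h.
  - by move=> x _; rewrite lee_fin; case/andP: (hf x).
have fin : (\int[P]_x (f x)%:E)%E \is a fin_num.
  rewrite ge0_fin_numE; last by apply: le_trans lo; rewrite lee_fin.
  by apply: le_lt_trans hi _; exact: ltry.
by rewrite -!lee_fin fineK // lo hi.
Qed.
Lemma foo d (T : measurableType d) (R : realType) (S : T -> R) (n : nat) : measurable_fun setT S ->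
  measurable_fun setT (fun x => expR (- (S x / n%:R))).
Proof.
move=> mS.
apply: (measurableT_comp (@measurable_expR R)).
apply: (@measurable_funN _ _ _ _ (fun x => S x / n%:R)).
by apply: measurable_funM => //.
Qed.

Lemma ln_bounds d (T : measurableType d) (R : realType) (P : probability T R)
  (S : T -> R) (n : nat) (s : R) : measurable_fun setT S -> (0 < n)%N ->
  (forall x, 0 <= S x <= s) ->
  - (s / n%:R) <= ln (fine (\int[P]_x (expR (- (S x / n%:R)))%:E)%E) <= 0.
Proof.
move=> mS n0 hS.
have n0' : 0 < n%:R :> R by rewrite ltr0n.
have := @int_bounds _ _ _ P (fun x => expR (- (S x / n%:R))) (expR (- (s / n%:R)))
  (@foo _ _ _ S n mS).
case/(_ _ (expR_ge0 _))/andP.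
  move=> x; case/andP: (hS x) => h1 h2; apply/andP; split.
    by rewrite ler_expR lerN2 ler_pM2r ?invr_gt0.
  by rewrite expR_le1 oppr_le0 divr_ge0 // ltW.
move=> lo hi; apply/andP; split; last exact: ln_le0.
have pos : 0 < fine (\int[P]_x (expR (- (S x / n%:R)))%:E)%E.
  by apply: lt_le_trans lo; exact: expR_gt0.
rewrite -[X in X <= _]expRK ler_ln //; rewrite posrE //; exact: expR_gt0.
Qed.
Theorem lemma7p3 (R : realType) (M : completePseudoMetricType R)
  (hM_metric : hausdorff_space M) (hM_sep : separable_space M)
  (S : G (borelType M) R -> R)
  (hS_pos : forall g, 0 <= S g)
  (hS_meas : measurable_fun setT S)
  (n : nat) (hn : (0 < n)%N)
  (hS_bdd : has_ubound (range S))
  (Q : probability (G (borelType M) R) R)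
  (k : nat) (As : 'I_k -> set (borelType M))
  (hA_meas : forall i, measurable (As i))
  (hA_ne : forall i, As i !=set0)
  (hA_disj : forall i j, i != j -> As i `&` As j = set0)
  (hA_cover : \bigcup_i As i = setT)
  (kappa : 'I_k -> G (borelType M) R -> probability (G (borelType M) R) R)
  (hkappa : forall i, is_rcd Q (As i) (kappa i))
  (g g' : G (borelType M) R) :
  `| Shat S n Q As kappa g - Shat S n Q As kappa g' |
    <= sup (range S) * fine ((g setT + g' setT)%E).
Proof.
set s := sup (range S).
have hSle : forall x, S x <= s by move=> x; apply: ub_le_sup => //; exists x.
have s0 : 0 <= s by apply: le_trans (hS_pos g) (hSle g).
have hSb : forall x, 0 <= S x <= s by move=> x; rewrite hS_pos hSle.
have n0 : 0 < n%:R :> R by rewrite ltr0n.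
set a := fun i => ln (Eexp (kappa i (restr (As i) g)) S n).
set b := fun i => ln (Eexp (kappa i (restr (As i) g')) S n).
have LB : forall P, - (s / n%:R) <= ln (Eexp P S n) <= 0.
  move=> P; exact: ln_bounds.
have key : forall i, n%:R * `|a i - b i| <=
    s * (fine (g (As i)) + fine (g' (As i))).
  move=> i.
  have [m hm] := gm_int g (hA_meas i).
  have [m' hm'] := gm_int g' (hA_meas i).
  have -> : fine (g (As i)) = m%:R by rewrite hm.
  have -> : fine (g' (As i)) = m'%:R by rewrite hm'.
  case: (posnP (m + m')) => hmm.
    move/eqP: hmm; rewrite addn_eq0 => /andP[/eqP m0 /eqP m'0].
    have -> : a i = b i.
      rewrite /a /b /Eexp; congr (ln (fine _)).
      apply: eq_measure_integral => B mB _.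
      apply: (@kappa_insep _ _ _ _ (hkappa i).1) => // C mC.
      apply: restr_eq => //; [by rewrite hm m0 | by rewrite hm' m'0].
    by rewrite subrr normr0 mulr0 m0 m'0 addr0 mulr0.
  apply: (@le_trans _ _ s).
    rewrite -ler_pdivlMl //.
    have /andP[a1 a2] := LB (kappa i (restr (As i) g)).
    have /andP[b1 b2] := LB (kappa i (restr (As i) g')).
    rewrite -/(a i) -/(b i) in a1 a2 b1 b2.
    rewrite mulrC ler_norml; apply/andP; split; lra.
  rewrite -natrD -{1}(mulr1 s) ler_wpM2l // ler1n //.
rewrite /Shat -mulrBr -sumrB.
rewrite (eq_bigr (fun i => a i - b i)); last first.
  by move=> i _; rewrite /a /b opprB addrA subrK.
rewrite normrM normrN normr_nat.
apply: (le_trans (ler_wpM2l (ler0n _ _) (ler_norm_sum _ _ _))).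
rewrite mulr_sumr.
apply: (le_trans (ler_sum _ (fun i _ => key i))).
rewrite -mulr_sumr big_split /= -!part_sum //.
have fin (h : G (borelType M) R) : h setT \is a fin_num.
  by have [m hm] := gm_int h measurableT; rewrite hm.
by rewrite fineD.
Qed.
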